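(* For every positive integer $k$, $$W(k+1,2)=\frac{\pi}{2^k}\,\bar t(k)-\bar T(1,k).$$
   Context: $\bar t(k):=\sum_{n\ge1}\frac{(-1)^{n-1}}{(n-1/2)^k}$. For positive integers $k_1,k_2$, $\bar T(k_1,k_2):=4\sum_{0<n_1<n_2}\frac{(-1)^{n_2}}{(2n_1-1)^{k_1}(2n_2-2)^{k_2}}$, and $W(K,2):=\sum_{k_1+k_2=K,\,k_1,k_2\ge1}\bar T(k_1,k_2)$. *)

(* Defs.v *)
From Stdlib Require Import Reals List.
From Coquelicot Require Import Coquelicot.
Open Scope R_scope.

(* tbar k = sum_{n>=1} (-1)^(n-1) / (n - 1/2)^k ; index m = n - 1 >= 0.
   Series = limit of the partial sums in the natural order. *)
Definition tbar (k : nat) : R :=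
  Series (fun m : nat => (-1) ^ m / (INR m + / 2) ^ k).

(* Tbar k1 k2 = 4 * sum_{0<n1<n2} (-1)^n2 / ((2 n1 - 1)^k1 (2 n2 - 2)^k2),
   summed as an iterated series: outer index n2 = m + 2 (n2 >= 2), inner
   finite sum over n1 = j + 1 with j = 0 .. m (i.e. 1 <= n1 <= n2 - 1). *)
Definition Tbar (k1 k2 : nat) : R :=
  4 * Series (fun m : nat =>
        (-1) ^ (m + 2) / (2 * INR (m + 2) - 2) ^ k2 *
        sum_n (fun j : nat => / (2 * INR (j + 1) - 1) ^ k1) m).

Definition W2 (K : nat) : R :=
  fold_right Rplus 0 (map (fun k1 => Tbar k1 (K - k1)) (seq 1 (K - 1))).

(* Main.v *)
From Stdlib Require Import Reals List Lra Lia.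
From Coquelicot Require Import Coquelicot.
Require Import Defs.
Open Scope R_scope.

Lemma sum_rev (f : nat -> R) n :
  sum_f_R0 (fun j => f (n - j)%nat) n = sum_f_R0 f n.
Proof.
  induction n as [|n IH].
  - reflexivity.
  - rewrite decomp_sum by lia. simpl pred.
    replace (S n - 0)%nat with (S n) by lia.
    rewrite (sum_eq (fun i => f (S n - S i)%nat) (fun j => f (n - j)%nat)) by (intros; f_equal).
    rewrite IH. simpl. ring.
Qed.

Lemma sum_triangle (a b : nat -> R) M :
  sum_f_R0 (fun m => sum_f_R0 (fun j => a j * b (m - j)%nat) m) M =
  sum_f_R0 (fun j => a j * sum_f_R0 b (M - j)) M.
Proof.
  induction M as [|M IH].
  - simpl. ring.
  - rewrite (tech5 (fun m => sum_f_R0 (fun j => a j * b (m - j)%nat) m)), IH.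
    rewrite (tech5 (fun j => a j * b (S M - j)%nat)).
    rewrite (tech5 (fun j => a j * sum_f_R0 b (S M - j))).
    rewrite (sum_eq (fun j => a j * sum_f_R0 b (S M - j))
                    (fun j => a j * sum_f_R0 b (M - j) + a j * b (S M - j)%nat)).
    + rewrite sum_plus. rewrite Nat.sub_diag. change (sum_f_R0 b 0) with (b 0%nat). ring.
    + intros i Hi. replace (S M - i)%nat with (S (M - i)) by lia. simpl. ring.
Qed.

Lemma geo_pf a b n : 0 < a -> 0 < b -> a <> b ->
  sum_f_R0 (fun i => / a ^ (S i) * / b ^ (S n - i)) n = (/ a ^ (S n) - / b ^ (S n)) / (b - a).
Proof.
  intros Ha Hb Hab.
  induction n as [|n IH].
  - simpl. field. repeat split; lra.
  - rewrite tech5.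
    rewrite (sum_eq (fun i => / a ^ (S i) * / b ^ (S (S n) - i))
                    (fun i => (/ a ^ (S i) * / b ^ (S n - i)) * / b)).
    + rewrite <- scal_sum. rewrite IH. replace (S (S n) - S n)%nat with 1%nat by lia.
      assert (a ^ S n > 0) by (apply pow_lt; lra).
      assert (b ^ S n > 0) by (apply pow_lt; lra).
      change (a ^ S (S n)) with (a * a ^ S n). change (b ^ S (S n)) with (b * b ^ S n).
      simpl (b ^ 1). field. repeat split; lra.
    + intros i Hi. replace (S (S n) - i)%nat with (S (S n - i)) by lia.
      change (b ^ S (S n - i)) with (b * b ^ (S n - i)).
      assert (b ^ (S n - i) > 0) by (apply pow_lt; lra).
      assert (a ^ S i > 0) by (apply pow_lt; lra).
      field. repeat split; lra.
Qed.

Lemma alt_conv (Un : nat -> R) : Un_decreasing Un -> is_lim_seq Un 0 ->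
  exists l, is_series (fun n => (-1) ^ n * Un n) l.
Proof.
  intros Hd Hl. apply is_lim_seq_Reals in Hl.
  destruct (alternated_series Un Hd Hl) as [l H].
  exists l. apply is_series_Reals. intros e He. destruct (H e He) as [N HN].
  exists N. intros n Hn. apply HN. exact Hn.
Qed.

Lemma cesaro_odd :
  is_lim_seq (fun n => sum_f_R0 (fun j => / (2 * INR j + 1)) n / INR (S n)) 0.
Proof.
  assert (H := Cesaro_1 PI_tg 0 PI_tg_cv).
  apply is_lim_seq_Reals in H. apply is_lim_seq_incr_1 in H.
  eapply is_lim_seq_ext; [|exact H]. intros n. cbv beta. simpl pred.
  f_equal. apply sum_eq. intros i _. unfold PI_tg. f_equal.
  rewrite plus_INR, mult_INR. simpl. ring.
Qed.

Lemma PI_tail n : Rabs (sum_f_R0 (tg_alt PI_tg) n - PI / 4) <= PI_tg n.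
Proof.
  assert (Hd := PI_tg_decreasing).
  destruct (Nat.Even_or_Odd n) as [[N HN]|[N HN]]; subst n.
  - destruct (PI_ineq N) as [H1 H2].
    rewrite tech5 in H1. unfold tg_alt at 2 in H1.
    rewrite pow_1_odd in H1.
    assert (PI_tg (S (2*N)) <= PI_tg (2*N)) by apply Hd.
    assert (0 <= PI_tg (S (2*N))).
    { unfold PI_tg. left. apply Rinv_0_lt_compat. apply lt_0_INR. lia. }
    apply Rabs_le. lra.
  - destruct (PI_ineq N) as [H1 H2].
    destruct (PI_ineq (S N)) as [H3 H4].
    replace (2 * S N)%nat with (S (S (2 * N))) in H4 by lia.
    rewrite tech5 in H4. unfold tg_alt at 2 in H4.
    replace (S (S (2 * N))) with (2 * S N)%nat in H4 by lia.
    rewrite pow_1_even in H4.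
    replace (2 * N + 1)%nat with (S (2 * N)) by lia.
    assert (PI_tg (S (S (2*N))) <= PI_tg (S (2*N))) by apply Hd.
    replace (2 * S N)%nat with (S (S (2 * N))) in H4 by lia.
    apply Rabs_le. lra.
Qed.

Definition Hodd (k1 m : nat) : R := sum_f_R0 (fun j => / (2 * INR j + 1) ^ k1) m.
Definition u (k1 k2 m : nat) : R := (-1) ^ m * (Hodd k1 m / (2 * INR m + 2) ^ k2).
Definition alpha (k j : nat) : R := (-1) ^ j * / (2 * INR j + 1) ^ k.

Lemma Tbar_eq k1 k2 : Tbar k1 k2 = 4 * Series (u k1 k2).
Proof.
  unfold Tbar. f_equal. apply Series_ext. intros m. unfold u, Hodd.
  rewrite sum_n_Reals.
  rewrite (sum_eq _ (fun j => / (2 * INR j + 1) ^ k1)).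
  2:{ intros i _. rewrite plus_INR. simpl. f_equal. f_equal. ring. }
  rewrite pow_add. rewrite plus_INR. simpl (INR 2).
  replace (2 * (INR m + (1+1)) - 2) with (2 * INR m + 2) by ring.
  unfold Rdiv. ring.
Qed.

Lemma tbar_eq k : tbar k = 2 ^ k * Series (alpha k).
Proof.
  unfold tbar. rewrite <- Series_scal_l. apply Series_ext. intros m.
  unfold alpha. replace (INR m + / 2) with ((2 * INR m + 1) / 2) by field.
  unfold Rdiv. rewrite Rpow_mult_distr, pow_inv.
  assert (0 < 2 * INR m + 1) by (pose proof (pos_INR m); lra).
  assert (0 < (2 * INR m + 1) ^ k) by (apply pow_lt; lra).
  assert (0 < 2 ^ k) by (apply pow_lt; lra).
  field. lra.
Qed.

Lemma pow_ge_self x n : 1 <= x -> (1 <= n)%nat -> x <= x ^ n.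
Proof.
  intros Hx Hn. rewrite <- (pow_1 x) at 1. apply Rle_pow; auto.
Qed.

Lemma Hodd_ge1 k1 m : 1 <= Hodd k1 m.
Proof.
  unfold Hodd. induction m as [|m IH].
  - simpl. rewrite Rmult_0_r, Rplus_0_l, pow1. lra.
  - rewrite tech5. assert (0 < / (2 * INR (S m) + 1) ^ k1).
    { apply Rinv_0_lt_compat, pow_lt. pose proof (pos_INR (S m)); lra. }
    lra.
Qed.

Lemma Hodd_le1 k1 m : (1 <= k1)%nat -> Hodd k1 m <= Hodd 1 m.
Proof.
  intros Hk. unfold Hodd. apply sum_Rle. intros n _.
  pose proof (pos_INR n).
  apply Rinv_le_contravar; rewrite pow_1. lra.
  apply pow_ge_self; auto. lra.
Qed.

Lemma cesaro_H : is_lim_seq (fun n => Hodd 1 n / INR (S n)) 0.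
Proof.
  eapply is_lim_seq_ext; [|apply cesaro_odd]. intros n. cbv beta.
  unfold Hodd. f_equal. apply sum_eq. intros; now rewrite pow_1.
Qed.

Lemma div_le x y z w : 0 < y -> 0 < w -> x * w <= z * y -> x / y <= z / w.
Proof.
  intros Hy Hw H. apply (Rmult_le_reg_r (y * w)). nra.
  replace (x / y * (y * w)) with (x * w) by (field; lra).
  replace (z / w * (y * w)) with (z * y) by (field; lra). exact H.
Qed.

Lemma u_conv k1 k2 : (1 <= k1)%nat -> (1 <= k2)%nat -> exists l, is_series (u k1 k2) l.
Proof.
  intros H1 H2. unfold u.
  apply alt_conv.
  - intros m. rewrite S_INR. unfold Hodd at 1. rewrite tech5. fold (Hodd k1 m).
    rewrite S_INR.
    pose proof (pos_INR m) as Hm0. pose proof (Hodd_ge1 k1 m) as HH1.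
    set (b := 2 * INR m + 2). set (H := Hodd k1 m) in *.
    set (c := / (2 * (INR m + 1) + 1) ^ k1).
    assert (Hb : 2 <= b) by (unfold b; lra).
    assert (Hc0 : 0 < c). { unfold c. apply Rinv_0_lt_compat, pow_lt. lra. }
    assert (Hcb : c * b <= 1).
    { unfold c. assert (b <= (2 * (INR m + 1) + 1) ^ k1).
      { eapply Rle_trans; [|apply pow_ge_self; auto]. unfold b; lra. lra. }
      assert (0 < (2 * (INR m + 1) + 1) ^ k1) by (apply pow_lt; lra).
      apply (Rmult_le_reg_l ((2 * (INR m + 1) + 1) ^ k1)). lra.
      rewrite <- Rmult_assoc, Rinv_r by lra. lra. }
    replace (2 * (INR m + 1) + 2) with (b + 2) by (unfold b; ring).
    destruct k2 as [|p]; [lia|].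
    change ((b + 2) ^ S p) with ((b + 2) * (b + 2) ^ p).
    change (b ^ S p) with (b * b ^ p).
    assert (HP : 0 < b ^ p) by (apply pow_lt; lra).
    assert (HPP : b ^ p <= (b + 2) ^ p) by (apply pow_incr; lra).
    apply div_le. nra. nra.
    assert (H * ((b + 2) * b ^ p) <= H * ((b + 2) * (b + 2) ^ p)).
    { apply Rmult_le_compat_l. lra. apply Rmult_le_compat_l; lra. }
    assert ((H + c) * (b * b ^ p) <= H * ((b + 2) * b ^ p)).
    { replace ((H + c) * (b * b ^ p)) with ((H * b + c * b) * b ^ p) by ring.
      replace (H * ((b + 2) * b ^ p)) with ((H * b + 2 * H) * b ^ p) by ring.
      apply Rmult_le_compat_r; lra. }
    lra.
  - apply is_lim_seq_le_le with (u := fun _ => 0) (w := fun n => / 2 * (Hodd 1 n / INR (S n))).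
    + intros n. pose proof (pos_INR n). pose proof (Hodd_ge1 k1 n).
      pose proof (Hodd_le1 k1 n H1).
      assert (0 < (2 * INR n + 2) ^ k2) by (apply pow_lt; lra).
      split.
      * apply Rmult_le_pos. lra. left. apply Rinv_0_lt_compat. lra.
      * rewrite S_INR.
        replace (/ 2 * (Hodd 1 n / (INR n + 1))) with (Hodd 1 n / (2 * INR n + 2)) by (field; lra).
        apply div_le. lra. lra.
        assert (2 * INR n + 2 <= (2 * INR n + 2) ^ k2) by (apply pow_ge_self; auto; lra).
        assert (Hodd k1 n * (INR n + 1) <= Hodd 1 n * (INR n + 1)) by (apply Rmult_le_compat_r; lra).
        assert (Hodd 1 n * (2 * INR n + 2) <= Hodd 1 n * (2 * INR n + 2) ^ k2) by (apply Rmult_le_compat_l; lra).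
        lra.
    + apply is_lim_seq_const.
    + replace (Finite 0) with (Rbar_mult (/2) 0) by (simpl; f_equal; ring).
      apply is_lim_seq_scal_l. apply cesaro_H.
Qed.

Lemma alpha_conv k : (1 <= k)%nat -> exists l, is_series (alpha k) l.
Proof.
  intros Hk. unfold alpha. apply alt_conv.
  - intros m. rewrite S_INR. pose proof (pos_INR m).
    apply Rinv_le_contravar. apply pow_lt; lra. apply pow_incr; lra.
  - apply is_lim_seq_le_le with (u := fun _ => 0) (w := PI_tg).
    + intros n. pose proof (pos_INR n). split.
      * left. apply Rinv_0_lt_compat, pow_lt. lra.
      * unfold PI_tg. rewrite plus_INR, mult_INR. simpl (INR 2); simpl (INR 1).
        apply Rinv_le_contravar. lra. apply pow_ge_self; auto; lra.
    + apply is_lim_seq_const.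
    + apply is_lim_seq_Reals. apply PI_tg_cv.
Qed.

Lemma sum_minus_ (f g : nat -> R) n :
  sum_f_R0 (fun i => f i - g i) n = sum_f_R0 f n - sum_f_R0 g n.
Proof. induction n; simpl; [ring| rewrite IHn; ring]. Qed.

Lemma sum_switch (g : nat -> nat -> R) n M :
  sum_f_R0 (fun i => sum_f_R0 (g i) M) n = sum_f_R0 (fun m => sum_f_R0 (fun i => g i m) n) M.
Proof.
  induction n as [|n IH].
  - reflexivity.
  - simpl sum_f_R0 at 1. rewrite IH. rewrite <- sum_plus. apply sum_eq. intros; reflexivity.
Qed.

Lemma fold_sum (f : nat -> R) s n :
  fold_right Rplus 0 (map f (seq s (S n))) = sum_f_R0 (fun i => f (s + i)%nat) n.
Proof.
  revert s. induction n as [|n IH]; intros s.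
  - simpl. rewrite Nat.add_0_r. ring.
  - change (seq s (S (S n))) with (s :: seq (S s) (S n)).
    change (fold_right Rplus 0 (map f (s :: seq (S s) (S n)))) with
      (f s + fold_right Rplus 0 (map f (seq (S s) (S n)))). rewrite IH.
    rewrite (decomp_sum (fun i => f (s + i)%nat)) by lia. simpl pred.
    rewrite Nat.add_0_r. f_equal. apply sum_eq. intros i _. f_equal. lia.
Qed.

Lemma scal_sum_l (f : nat -> R) x n :
  sum_f_R0 (fun i => x * f i) n = x * sum_f_R0 f n.
Proof. induction n; simpl; [ring| rewrite IHn; ring]. Qed.

Definition F (k M : nat) : R :=
  sum_f_R0 (fun j => alpha k j * sum_f_R0 (tg_alt PI_tg) (M - j)) M.

Lemma per_m k' m :
  sum_f_R0 (fun i => u (S i) (S k' - i) m) k' =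
  sum_f_R0 (fun j => alpha (S k') j * tg_alt PI_tg (m - j)%nat) m - u 1 (S k') m.
Proof.
  unfold u. rewrite scal_sum_l.
  set (b := 2 * INR m + 2).
  pose proof (pos_INR m) as Hm.
  assert (Hb : 0 < b) by (unfold b; lra).
  unfold Hodd.
  rewrite (sum_eq _ (fun i => sum_f_R0 (fun j => / (2 * INR j + 1) ^ S i * / b ^ (S k' - i)) m)).
  2:{ intros i _. unfold Rdiv. rewrite Rmult_comm, scal_sum. reflexivity. }
  rewrite sum_switch.
  rewrite (sum_eq _ (fun j => / (2 * INR j + 1) ^ S k' * PI_tg (m - j) - / b ^ S k' * PI_tg (m - j))).
  2:{ intros j Hj. rewrite geo_pf.
      - unfold PI_tg. rewrite plus_INR, mult_INR, minus_INR by exact Hj. simpl (INR 2); simpl (INR 1).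
        unfold b. pose proof (le_INR _ _ Hj). pose proof (pos_INR j). field. repeat split; [lra | apply pow_nonzero; lra | apply pow_nonzero; lra].
      - pose proof (pos_INR j); lra.
      - exact Hb.
      - pose proof (le_INR _ _ Hj). unfold b. lra. }
  rewrite sum_minus_.
  rewrite (scal_sum_l (fun j => PI_tg (m - j)) (/ b ^ S k') m).
  rewrite (sum_rev PI_tg m).
  replace (sum_f_R0 PI_tg m) with (sum_f_R0 (fun j => / (2 * INR j + 1) ^ 1) m).
  2:{ apply sum_eq. intros i _. unfold PI_tg. rewrite pow_1, plus_INR, mult_INR. reflexivity. }
  rewrite Rmult_minus_distr_l. unfold Rminus. f_equal.
  - rewrite scal_sum. apply sum_eq. intros j Hj. unfold alpha, tg_alt.
    replace ((-1) ^ m) with ((-1) ^ j * (-1) ^ (m - j)).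
    + ring.
    + rewrite <- pow_add. f_equal. lia.
  - unfold Rdiv. ring.
Qed.

Lemma finite_id k' M :
  fold_right Rplus 0 (map (fun x => sum_n (u x (S k' + 1 - x)) M) (seq 1 (S k'))) =
  F (S k') M - sum_n (u 1 (S k')) M.
Proof.
  rewrite fold_sum.
  rewrite (sum_eq _ (fun i => sum_f_R0 (fun m => u (S i) (S k' - i) m) M)).
  2:{ intros i _. rewrite sum_n_Reals. replace (S k' + 1 - (1 + i))%nat with (S k' - i)%nat by lia.
      reflexivity. }
  rewrite (sum_switch (fun i m => u (S i) (S k' - i) m)).
  rewrite (sum_eq _ _ M (fun m _ => per_m k' m)).
  rewrite sum_minus_. rewrite sum_triangle. rewrite sum_n_Reals. reflexivity.
Qed.

Lemma series_lim (a : nat -> R) l : is_series a l -> is_lim_seq (sum_n a) l.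
Proof. intros H. exact H. Qed.

Lemma F_lim k L : (1 <= k)%nat -> is_series (alpha k) L -> is_lim_seq (F k) (L * (PI / 4)).
Proof.
  intros Hk HL.
  assert (HA : is_lim_seq (fun M => sum_f_R0 (alpha k) M) L).
  { eapply is_lim_seq_ext; [|apply series_lim; exact HL]. intros n. apply sum_n_Reals. }
  assert (Hbound : forall M, Rabs (F k M - sum_f_R0 (alpha k) M * (PI / 4)) <= Hodd 1 M / INR (S M)).
  { intros M. unfold F. rewrite (Rmult_comm (sum_f_R0 (alpha k) M)), scal_sum. rewrite <- sum_minus_.
    rewrite (sum_eq _ (fun j => alpha k j * (sum_f_R0 (tg_alt PI_tg) (M - j) - PI / 4)))
      by (intros; ring).
    eapply Rle_trans; [apply Rsum_abs|].
    eapply Rle_trans.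
    { apply (sum_Rle _ (fun j => / (2 * INR j + 1) * PI_tg (M - j))). intros j Hj.
      rewrite Rabs_mult. pose proof (pos_INR j).
      apply Rmult_le_compat; try apply Rabs_pos.
      - unfold alpha. rewrite Rabs_mult, pow_1_abs, Rmult_1_l.
        rewrite Rabs_pos_eq by (left; apply Rinv_0_lt_compat, pow_lt; lra).
        apply Rinv_le_contravar. lra. apply pow_ge_self; auto; lra.
      - apply PI_tail. }
    right.
    rewrite (sum_eq _ (fun j => / (2 * INR M + 2) * (/ (2 * INR j + 1) + PI_tg (M - j)))).
    2:{ intros j Hj. unfold PI_tg. rewrite plus_INR, mult_INR, minus_INR by exact Hj.
        simpl (INR 2); simpl (INR 1). pose proof (pos_INR j). pose proof (le_INR _ _ Hj).
        field. lra. }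
    rewrite scal_sum_l, sum_plus, (sum_rev PI_tg M).
    unfold Hodd. rewrite (sum_eq (fun j => / (2 * INR j + 1) ^ 1) (fun j => / (2 * INR j + 1))) by (intros; now rewrite pow_1).
    rewrite (sum_eq PI_tg (fun j => / (2 * INR j + 1))).
    2:{ intros i _. unfold PI_tg. rewrite plus_INR, mult_INR. reflexivity. }
    rewrite S_INR. pose proof (pos_INR M). field. lra. }
  assert (HE : is_lim_seq (fun M => sum_f_R0 (alpha k) M * (PI / 4)) (L * (PI / 4))).
  { apply (is_lim_seq_scal_r _ (PI / 4) L) in HA. exact HA. }
  apply is_lim_seq_le_le with
    (u := fun M => sum_f_R0 (alpha k) M * (PI / 4) - Hodd 1 M / INR (S M))
    (w := fun M => sum_f_R0 (alpha k) M * (PI / 4) + Hodd 1 M / INR (S M)).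
  - intros M. specialize (Hbound M). apply Rabs_le_between in Hbound. lra.
  - replace (L * (PI / 4)) with (L * (PI / 4) - 0) by ring.
    apply is_lim_seq_minus'; [exact HE | apply cesaro_H].
  - replace (L * (PI / 4)) with (L * (PI / 4) + 0) by ring.
    apply is_lim_seq_plus'; [exact HE | apply cesaro_H].
Qed.

Lemma fold_lim (g : nat -> nat -> R) s n :
  (forall x, (s <= x)%nat -> (x < s + n)%nat -> is_series (g x) (Series (g x))) ->
  is_lim_seq (fun M => fold_right Rplus 0 (map (fun x => sum_n (g x) M) (seq s n)))
    (fold_right Rplus 0 (map (fun x => Series (g x)) (seq s n))).
Proof.
  revert s. induction n as [|n IH]; intros s H.
  - simpl. apply is_lim_seq_const.
  - simpl. apply is_lim_seq_plus'.
    + apply series_lim. apply H; lia.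
    + apply IH. intros x H1 H2. apply H; lia.
Qed.

Lemma fold_scal (f : nat -> R) c l :
  fold_right Rplus 0 (map (fun x => c * f x) l) = c * fold_right Rplus 0 (map f l).
Proof. induction l; simpl; [ring| rewrite IHl; ring]. Qed.

Theorem mainTheorem14 (k : nat) (hk : (1 <= k)%nat) :
  W2 (k + 1) = PI / 2 ^ k * tbar k - Tbar 1 k.
Proof.
  destruct k as [|k']; [lia|].
  destruct (alpha_conv (S k') hk) as [L HL].
  assert (HU : forall x, (1 <= x)%nat -> (x < 1 + S k')%nat ->
     is_series (u x (S k' + 1 - x)) (Series (u x (S k' + 1 - x)))).
  { intros x H1 H2. destruct (u_conv x (S k' + 1 - x)) as [l Hl]; try lia.
    rewrite (is_series_unique _ _ Hl). exact Hl. }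
  pose proof (fold_lim (fun x => u x (S k' + 1 - x)) 1 (S k') HU) as Hlim1.
  destruct (u_conv 1 (S k')) as [l1 Hl1]; try lia.
  assert (Hlim2 : is_lim_seq (fun M => F (S k') M - sum_n (u 1 (S k')) M) (L * (PI / 4) - l1)).
  { apply is_lim_seq_minus'. apply F_lim; auto. apply series_lim; exact Hl1. }
  assert (Heq : fold_right Rplus 0 (map (fun x => Series (u x (S k' + 1 - x))) (seq 1 (S k')))
                = L * (PI / 4) - l1).
  { eapply is_lim_seq_ext in Hlim1; [| intros M; apply finite_id].
    apply is_lim_seq_unique in Hlim1. apply is_lim_seq_unique in Hlim2.
    rewrite Hlim1 in Hlim2. injection Hlim2. auto. }
  unfold W2. replace (S k' + 1 - 1)%nat with (S k') by lia.
  rewrite (map_ext (fun k1 => Tbar k1 (S k' + 1 - k1)) (fun k1 => 4 * Series (u k1 (S k' + 1 - k1))))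
    by (intros; apply Tbar_eq).
  rewrite fold_scal, Heq.
  rewrite tbar_eq, (is_series_unique _ _ HL), Tbar_eq, (is_series_unique _ _ Hl1).
  assert (2 ^ S k' <> 0) by (apply pow_nonzero; lra).
  field. auto.
Qed.
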